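(* Let $\mathcal{D}$ be a dome over a convex polygon $P$ lying in the $xy$-plane with the dome above it. Let $b_i$ be a vertex of $P$ with interior angle at least $120^\circ$, with incident dome triangles $t_1, t_2, t_3$ in order around $b_i$, where $t_1$ and $t_3$ are incident to the two edges of $P$ at $b_i$. If $t_1$ has a downward normal, then $t_1$ is not coplanar with $t_2$, and hence the face of $\mathcal{D}$ containing $t_1$ has face angle $60^\circ$ at $b_i$.
   Context: All equilateral triangles have unit edge length. A polyiamond is a polygon that is a union of unit equilateral triangles. A dome over a convex polygon $P$ is the surface consisting of all faces other than $P$ of a convex polyhedron that has $P$ as one face and all of whose other faces are convex polyiamonds; the dome triangles are the unit triangles composing the dome's faces. A triangle or face has a downward (upward) normal if its outward normal has negative (positive) $z$-component. *)

(* Defs.v *)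
From HB Require Import structures.
From mathcomp Require Import all_boot all_order all_algebra.
From mathcomp Require Import all_classical all_reals all_analysis.
Set Implicit Arguments. Unset Strict Implicit. Unset Printing Implicit Defensive.
Import Order.TTheory GRing.Theory Num.Theory.
Local Open Scope classical_set_scope.
Local Open Scope ring_scope.

Section Dome.
Variable R : realType.

Definition pt3 := 'rV[R]_3.
Definition cx (p : pt3) : R := p ord0 (@Ordinal 3 0 isT).
Definition cy (p : pt3) : R := p ord0 (@Ordinal 3 1 isT).
Definition cz (p : pt3) : R := p ord0 (@Ordinal 3 2 isT).

Definition dot (u v : pt3) : R := \sum_(i < 3) u ord0 i * v ord0 i.
Definition vnorm (u : pt3) : R := Num.sqrt (dot u u).
Definition vangle (u v : pt3) : R := acos (dot u v / (vnorm u * vnorm v)).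

Definition cross (u v : pt3) : pt3 :=
  \row_(i < 3)
    (if val i == 0%N then cy u * cz v - cz u * cy v
     else if val i == 1%N then cz u * cx v - cx u * cz v
     else cx u * cy v - cy u * cx v).

Definition cross2 (u v : pt3) : R := cx u * cy v - cy u * cx v.

Definition conv (S : set pt3) : set pt3 :=
  [set x | exists (n : nat) (w : 'I_n -> R) (p : 'I_n -> pt3),
     (forall i, 0 <= w i) /\ \sum_(i < n) w i = 1 /\ (forall i, S (p i)) /\
     x = \sum_(i < n) w i *: p i].

Definition noncollinear (a b c : pt3) : Prop := cross (b - a) (c - a) != 0.
Definition two_dim (F : set pt3) : Prop :=
  exists a b c, F a /\ F b /\ F c /\ noncollinear a b c.

Definition is_face (Q F : set pt3) : Prop :=
  exists (n : pt3) (c : R), n != 0 /\ (forall x, Q x -> dot n x <= c) /\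
    F = Q `&` [set x | dot n x = c] /\ two_dim F.

Definition has_interior (Q : set pt3) : Prop :=
  exists x e, 0 < e /\ forall y, vnorm (y - x) < e -> Q y.

Definition triangle := (pt3 * pt3 * pt3)%type.
Definition tverts (t : triangle) : set pt3 :=
  [set x | x = t.1.1 \/ x = t.1.2 \/ x = t.2].
Definition tregion (t : triangle) : set pt3 := conv (tverts t).
Definition unit_triangle (t : triangle) : Prop :=
  vnorm (t.1.2 - t.1.1) = 1 /\ vnorm (t.2 - t.1.2) = 1 /\ vnorm (t.1.1 - t.2) = 1.
(* interiors disjoint: the overlap has zero area *)
Definition int_disjoint (t t' : triangle) : Prop :=
  ~ two_dim (tregion t `&` tregion t').

(* convex polygon given by its vertices b_0, ..., b_{n-1} (indices mod n),
   counterclockwise, in the plane z = 0 *)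
Definition bnth (bs : seq pt3) (i : nat) : pt3 := nth 0 bs (i %% size bs).
Definition convex_polygon (bs : seq pt3) : Prop :=
  (3 <= size bs)%N /\ (forall p, p \in bs -> cz p = 0) /\
  forall i j, (i < size bs)%N -> (j < size bs)%N -> j != i ->
    j != (i.+1 %% size bs)%N ->
    0 < cross2 (bnth bs i.+1 - bnth bs i) (bnth bs j - bnth bs i).
Definition polyregion (bs : seq pt3) : set pt3 := conv [set p | p \in bs].

(* a dome: the polygon P = bs and the dome faces, each given as the list of
   unit triangles composing it *)
Definition faceU (F : seq triangle) : set pt3 :=
  [set x | exists t, t \in F /\ tregion t x].
Definition dome_points (bs : seq pt3) (faces : seq (seq triangle)) : set pt3 :=
  [set p | p \in bs \/ exists F t, F \in faces /\ t \in F /\ tverts t p].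
Definition domeQ bs faces : set pt3 := conv (dome_points bs faces).

Definition is_dome (bs : seq pt3) (faces : seq (seq triangle)) : Prop :=
  let Q := domeQ bs faces in
  convex_polygon bs /\ has_interior Q /\
  (forall x, Q x -> 0 <= cz x) /\
  is_face Q (polyregion bs) /\
  (forall F, F \in faces ->
     is_face Q (faceU F) /\ faceU F <> polyregion bs /\ uniq F /\
     (forall t, t \in F -> unit_triangle t) /\
     (forall t t', t \in F -> t' \in F -> t <> t' -> int_disjoint t t')) /\
  (forall F G, F \in faces -> G \in faces -> faceU F = faceU G -> F = G) /\
  (forall G, is_face Q G -> G = polyregion bs \/ exists F, F \in faces /\ G = faceU F).

Definition dome_triangle (faces : seq (seq triangle)) (t : triangle) : Prop :=
  exists F, F \in faces /\ t \in F.

(* t and t' share an edge b v emanating from b *)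
Definition shares_edge_at (b : pt3) (t t' : triangle) : Prop :=
  exists v, v != b /\ tverts t v /\ tverts t' v.

Definition along (t : triangle) (b q : pt3) : Prop :=
  exists v k, tverts t v /\ 0 < k /\ v - b = k *: (q - b).

Definition outward_normal (Q : set pt3) (t : triangle) (n : pt3) : Prop :=
  n != 0 /\ dot n (t.1.2 - t.1.1) = 0 /\ dot n (t.2 - t.1.1) = 0 /\
  forall x, Q x -> dot n (x - t.1.1) <= 0.
Definition downward (Q : set pt3) (t : triangle) : Prop :=
  exists n, outward_normal Q t n /\ cz n < 0.

Definition coplanar (t t' : triangle) : Prop :=
  exists (n : pt3) (c : R), n != 0 /\
    forall x, tverts t x \/ tverts t' x -> dot n x = c.

Definition face_angle (F : set pt3) (b : pt3) : R :=
  sup [set a | exists x y, F x /\ F y /\ x != b /\ y != b /\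
                 a = vangle (x - b) (y - b)].

End Dome.

(* Main.v *)
Require Import Defs.
From HB Require Import structures.
From mathcomp Require Import all_boot all_order all_algebra.
From mathcomp Require Import all_classical all_reals all_analysis.
From mathcomp Require Import ring lra zify.
From Stdlib Require Import Lia.
Import Order.TTheory GRing.Theory Num.Theory.
Local Open Scope classical_set_scope.
Local Open Scope ring_scope.
Set Implicit Arguments. Unset Strict Implicit.


Section S.
Variable R : realType.
Implicit Types u v w : pt3 R.

Lemma dotE u v : dot u v = cx u * cx v + cy u * cy v + cz u * cz v.
Proof.
rewrite /dot !big_ord_recl big_ord0 addr0 /cx /cy /cz addrA.
by congr (_ * _ + _ * _ + _ * _); congr (_ _ _); apply: val_inj.
Qed.
Lemma cxB u v : cx (u - v) = cx u - cx v. Proof. by rewrite /cx !mxE. Qed.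
Lemma cyB u v : cy (u - v) = cy u - cy v. Proof. by rewrite /cy !mxE. Qed.
Lemma czB u v : cz (u - v) = cz u - cz v. Proof. by rewrite /cz !mxE. Qed.
Lemma cxD u v : cx (u + v) = cx u + cx v. Proof. by rewrite /cx !mxE. Qed.
Lemma cyD u v : cy (u + v) = cy u + cy v. Proof. by rewrite /cy !mxE. Qed.
Lemma czD u v : cz (u + v) = cz u + cz v. Proof. by rewrite /cz !mxE. Qed.
Lemma cxZ k u : cx (k *: u) = k * cx u. Proof. by rewrite /cx !mxE. Qed.
Lemma cyZ k u : cy (k *: u) = k * cy u. Proof. by rewrite /cy !mxE. Qed.
Lemma czZ k u : cz (k *: u) = k * cz u. Proof. by rewrite /cz !mxE. Qed.
Lemma cx0 : cx (0 : pt3 R) = 0. Proof. by rewrite /cx !mxE. Qed.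
Lemma cy0 : cy (0 : pt3 R) = 0. Proof. by rewrite /cy !mxE. Qed.
Lemma cz0 : cz (0 : pt3 R) = 0. Proof. by rewrite /cz !mxE. Qed.
Lemma crossx u v : cx (cross u v) = cy u * cz v - cz u * cy v.
Proof. by rewrite {1}/cx mxE. Qed.
Lemma crossy u v : cy (cross u v) = cz u * cx v - cx u * cz v.
Proof. by rewrite {1}/cy mxE. Qed.
Lemma crossz u v : cz (cross u v) = cx u * cy v - cy u * cx v.
Proof. by rewrite {1}/cz mxE. Qed.

Lemma pt3_eq u v : cx u = cx v -> cy u = cy v -> cz u = cz v -> u = v.
Proof.
move=> h1 h2 h3; apply/matrixP => i j; rewrite [i]ord1.
case: j => [[|[|[|j]]] Hj] //.
- by move: h1; rewrite /cx; congr (_ = _); congr (_ _ _); apply: val_inj.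
- by move: h2; rewrite /cy; congr (_ = _); congr (_ _ _); apply: val_inj.
- by move: h3; rewrite /cz; congr (_ = _); congr (_ _ _); apply: val_inj.
Qed.

Lemma neq0P u : u != 0 -> cx u != 0 \/ cy u != 0 \/ cz u != 0.
Proof.
move=> /eqP H; case: (eqVneq (cx u) 0) => hx; last by left.
case: (eqVneq (cy u) 0) => hy; last by right; left.
case: (eqVneq (cz u) 0) => hz; last by right; right.
by exfalso; apply: H; apply: pt3_eq; rewrite ?cx0 ?cy0 ?cz0.
Qed.

Lemma vnorm1 u : vnorm u = 1 -> dot u u = 1.
Proof.
rewrite /vnorm => H.
have h0 : 0 <= dot u u by rewrite dotE; nra.
by rewrite -(sqr_sqrtr h0) H expr1n.
Qed.
End S.


Section S.
Variable R : realType.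
Implicit Types u v w : pt3 R.

Lemma sq_pos (x : R) : x != 0 -> 0 < x ^+ 2.
Proof. by move=> h; rewrite lt_def sqrf_eq0 h sqr_ge0. Qed.

Lemma decomp (p r m y : pt3 R) : cross p r != 0 -> m != 0 ->
  dot m p = 0 -> dot m r = 0 -> dot m y = 0 ->
  exists a b, y = a *: p + b *: r.
Proof.
move=> /neq0P hN /neq0P hm; rewrite !dotE => hp hr hy.
rewrite !crossx !crossy !crossz in hN.
set p1 := cx p in hN hp *; set p2 := cy p in hN hp *; set p3 := cz p in hN hp *.
set r1 := cx r in hN hr *; set r2 := cy r in hN hr *; set r3 := cz r in hN hr *.
set m1 := cx m in hm hp hr hy *; set m2 := cy m in hm hp hr hy *; set m3 := cz m in hm hp hr hy *.
set y1 := cx y in hy *; set y2 := cy y in hy *; set y3 := cz y in hy *.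
set N1 := p2 * r3 - p3 * r2 in hN. set N2 := p3 * r1 - p1 * r3 in hN.
set N3 := p1 * r2 - p2 * r1 in hN.
have NNpos : 0 < N1 ^+ 2 + N2 ^+ 2 + N3 ^+ 2.
  have h1 := sqr_ge0 N1; have h2 := sqr_ge0 N2; have h3 := sqr_ge0 N3.
  case: hN => [h|[h|h]]; move: h; move/sq_pos; lra.
set NN := N1 ^+ 2 + N2 ^+ 2 + N3 ^+ 2.
set mN := m1 * N1 + m2 * N2 + m3 * N3.
have e1 : NN * m1 = mN * N1.
  have : NN *  m1 - mN * N1 = (m1 * r1+m2 * r2+m3 * r3) * (N2 * p3 - N3 * p2)
     - (m1 * p1+m2 * p2+m3 * p3) * (N2 * r3-N3 * r2) by rewrite /NN /mN /N1 /N2 /N3; ring.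
  rewrite hp hr; lra.
have e2 : NN * m2 = mN * N2.
  have : NN *  m2 - mN * N2 = (m1 * r1+m2 * r2+m3 * r3) * (N3 * p1 - N1 * p3)
     - (m1 * p1+m2 * p2+m3 * p3) * (N3 * r1-N1 * r3) by rewrite /NN /mN /N1 /N2 /N3; ring.
  rewrite hp hr; lra.
have e3 : NN * m3 = mN * N3.
  have : NN *  m3 - mN * N3 = (m1 * r1+m2 * r2+m3 * r3) * (N1 * p2 - N2 * p1)
     - (m1 * p1+m2 * p2+m3 * p3) * (N1 * r2-N2 * r1) by rewrite /NN /mN /N1 /N2 /N3; ring.
  rewrite hp hr; lra.
have mN0 : mN != 0.
  apply/eqP => h0; rewrite h0 !mul0r in e1 e2 e3.
  have NN0 : NN != 0 by rewrite gt_eqF.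
  move: e1 e2 e3 => /eqP; rewrite mulf_eq0 (negbTE NN0) /= => /eqP e1 /eqP.
  rewrite mulf_eq0 (negbTE NN0) /= => /eqP e2 /eqP.
  rewrite mulf_eq0 (negbTE NN0) /= => /eqP e3.
  by case: hm => [/eqP|[/eqP|/eqP]].
have yN : y1 * N1 + y2 * N2 + y3 * N3 = 0.
  have : NN * (m1 * y1 + m2 * y2 + m3 * y3) = mN * (y1 * N1 + y2 * N2 + y3 * N3).
    have -> : NN * (m1 * y1 + m2 * y2 + m3 * y3) =
      (NN * m1) * y1 + (NN * m2) * y2 + (NN * m3) * y3 by ring.
    rewrite e1 e2 e3; ring.
  rewrite hy mulr0 => /esym /eqP; rewrite mulf_eq0 (negbTE mN0) /= => /eqP //.
set A := (y2 * r3 - y3 * r2) * N1 + (y3 * r1 - y1 * r3) * N2 + (y1 * r2 - y2 * r1) * N3.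
set B := (p2 * y3 - p3 * y2) * N1 + (p3 * y1 - p1 * y3) * N2 + (p1 * y2 - p2 * y1) * N3.
have NN0 : NN != 0 by rewrite gt_eqF.
exists (A / NN), (B / NN).
apply: pt3_eq; rewrite ?cxD ?cyD ?czD ?cxZ ?cyZ ?czZ -/p1 -/p2 -/p3 -/r1 -/r2 -/r3 -/y1 -/y2 -/y3.
- apply: (mulfI NN0).
  have -> : NN * (A / NN * p1 + B / NN * r1) = A * p1 + B * r1 by field.
  have : NN * y1 = A * p1 + B * r1 + (y1 * N1 + y2 * N2 + y3 * N3) * N1
    by rewrite /NN /A /B /N1 /N2 /N3; ring.
  by rewrite yN mul0r addr0.
- apply: (mulfI NN0).
  have -> : NN * (A / NN * p2 + B / NN * r2) = A * p2 + B * r2 by field.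
  have : NN * y2 = A * p2 + B * r2 + (y1 * N1 + y2 * N2 + y3 * N3) * N2
    by rewrite /NN /A /B /N1 /N2 /N3; ring.
  by rewrite yN mul0r addr0.
- apply: (mulfI NN0).
  have -> : NN * (A / NN * p3 + B / NN * r3) = A * p3 + B * r3 by field.
  have : NN * y3 = A * p3 + B * r3 + (y1 * N1 + y2 * N2 + y3 * N3) * N3
    by rewrite /NN /A /B /N1 /N2 /N3; ring.
  by rewrite yN mul0r addr0.
Qed.
End S.


Section S.
Variable R : realType.

Lemma cos_pi3 : cos (pi / 3 : R) = 1 / 2.
Proof.
set x : R := pi / 3.
have hpi : (pi : R) = x + x + x by rewrite /x; field.
have := @cospi R; rewrite hpi !cosD sinD.
have s2 := sin2cos2 x.
have hc : 0 < cos x.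
  apply: cos_gt0_pihalf; have := @pi_gt0 R; rewrite /x => h.
  apply/andP; split; lra.
set c := cos x in s2 hc *; set s := sin x in s2 *.
move=> h.
have h' : (c + 1) * (2 * c - 1) ^+ 2 = 0.
  have -> : (c + 1) * (2 * c - 1) ^+ 2 = (c * c - s * s) * c - (s * c + c * s) * s + 1
     + 3 * c * (s ^+ 2 - (1 - c ^+ 2)) by ring.
  rewrite h s2 subrr; ring.
move: h'; move/eqP; rewrite mulf_eq0 => /orP[/eqP|]; first lra.
rewrite sqrf_eq0 => /eqP; lra.
Qed.

Lemma acos_half : acos (1 / 2 : R) = pi / 3 :> R.
Proof.
rewrite -cos_pi3 cosK // in_itv /=; have := @pi_gt0 R => h.
apply/andP; split; lra.
Qed.

Lemma acos_lt (x y : R) : -1 <= x <= 1 -> -1 <= y <= 1 -> x < y -> acos y < acos x.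
Proof.
move=> hx hy hxy.
have hx' : acos x \in `[0, pi] by rewrite in_itv /= acos_ge0 // acos_lepi.
have hy' : acos y \in `[0, pi] by rewrite in_itv /= acos_ge0 // acos_lepi.
rewrite -(ltr_cos hy' hx') !acosK // in_itv /=.
Qed.

Lemma acos_le (x y : R) : -1 <= x <= 1 -> -1 <= y <= 1 -> x <= y -> acos y <= acos x.
Proof.
move=> hx hy; rewrite le_eqVlt => /orP[/eqP -> //|h].
exact/ltW/acos_lt.
Qed.

Lemma acos_ge2pi3 (x : R) : -1 <= x <= 1 -> 2 * pi / 3 <= acos x -> x <= - (1 / 2).
Proof.
move=> hx h; rewrite leNgt; apply/negP => hlt.
have : acos x < acos (- (1/2)) by apply: acos_lt => //; apply/andP; split; lra.
rewrite acosN ?acos_half; last by apply/andP; split; lra.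
move: h; lra.
Qed.
End S.


Section S.
Variable R : realType.
Implicit Types u v w x y : pt3 R.

Lemma dotC u v : dot u v = dot v u.
Proof. rewrite !dotE; ring. Qed.
Lemma dotBr n x y : dot n (x - y) = dot n x - dot n y.
Proof. rewrite !dotE cxB cyB czB; ring. Qed.
Lemma dotBl n x y : dot (x - y) n = dot x n - dot y n.
Proof. rewrite !dotE cxB cyB czB; ring. Qed.
Lemma dotDZr n (a b : R) u v : dot n (a *: u + b *: v) = a * dot n u + b * dot n v.
Proof. rewrite !dotE cxD cyD czD !cxZ !cyZ !czZ; ring. Qed.
Lemma dotDZl n (a b : R) u v : dot (a *: u + b *: v) n = a * dot u n + b * dot v n.
Proof. by rewrite dotC dotDZr !(dotC n). Qed.
Lemma dotsym x y : dot (x - y) (x - y) = dot (y - x) (y - x).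
Proof. rewrite !dotE !cxB !cyB !czB; ring. Qed.
Lemma dot00 : dot (0 : pt3 R) 0 = 0.
Proof. by rewrite dotE cx0 cy0 cz0; ring. Qed.

Lemma conv1 (S : set (pt3 R)) x : S x -> Defs.conv S x.
Proof.
move=> Sx; exists 1%N, (fun _ => 1), (fun _ => x); split => //; split.
  by rewrite big_ord1.
by split => //; rewrite big_ord1 scale1r.
Qed.

Lemma tri_dist (t : triangle R) x y : unit_triangle t -> tverts t x -> tverts t y ->
  x != y -> dot (x - y) (x - y) = 1.
Proof.
case: t => [[t1 t2] t3] [/= h1 [h2 h3]].
move/vnorm1: h1 => h1; move/vnorm1: h2 => h2; move/vnorm1: h3 => h3.
rewrite /tverts /= => hx hy.
by case: hx => [->|[->|->]]; case: hy => [->|[->|->]]; rewrite ?eqxx // => _;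
  rewrite ?h1 ?h2 ?h3 // dotsym ?h1 ?h2 ?h3.
Qed.

Lemma tri_neq (t : triangle R) : unit_triangle t ->
  [/\ t.1.1 != t.1.2, t.1.2 != t.2 & t.1.1 != t.2].
Proof.
case: t => [[t1 t2] t3] [/= h1 [h2 h3]].
move/vnorm1: h1 => h1; move/vnorm1: h2 => h2; move/vnorm1: h3 => h3.
split; apply/eqP => e.
- by move: h1; rewrite e subrr dot00 => /eqP; rewrite eq_sym oner_eq0.
- by move: h2; rewrite e subrr dot00 => /eqP; rewrite eq_sym oner_eq0.
- by move: h3; rewrite e subrr dot00 => /eqP; rewrite eq_sym oner_eq0.
Qed.

Lemma tri_third (t : triangle R) b a : unit_triangle t -> tverts t b -> tverts t a ->
  a != b -> exists c, [/\ tverts t c, c != a, c != b &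
     forall x, tverts t x -> x = b \/ x = a \/ x = c].
Proof.
move=> /[dup] ht /tri_neq; case: t ht => [[t1 t2] t3] ht /= [n12 n23 n13].
rewrite /tverts /= => hb ha.
have n21 : t2 != t1 by rewrite eq_sym.
have n32 : t3 != t2 by rewrite eq_sym.
have n31 : t3 != t1 by rewrite eq_sym.
case: hb => [->|[->|->]]; case: ha => [->|[->|->]]; rewrite ?eqxx // => nab;
  first [ (exists t1; split; [by left|by rewrite ?n12 ?n13 ?n21 ?n31 ?n23 ?n32|
                               by rewrite ?n12 ?n13 ?n21 ?n31 ?n23 ?n32|by move=> x; tauto])
        | (exists t2; split; [by right; left|by rewrite ?n12 ?n13 ?n21 ?n31 ?n23 ?n32|
                               by rewrite ?n12 ?n13 ?n21 ?n31 ?n23 ?n32|by move=> x; tauto])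
        | (exists t3; split; [by right; right|by rewrite ?n12 ?n13 ?n21 ?n31 ?n23 ?n32|
                               by rewrite ?n12 ?n13 ?n21 ?n31 ?n23 ?n32|by move=> x; tauto]) ].
Qed.

Lemma faceU_vert (F : seq (triangle R)) t x : t \in F -> tverts t x -> faceU F x.
Proof. by move=> tF hx; exists t; split => //; apply: conv1. Qed.

Lemma Q_vert bs faces (F : seq (triangle R)) t x : F \in faces -> t \in F -> tverts t x ->
  domeQ bs faces x.
Proof. by move=> hF tF hx; apply: conv1; right; exists F, t. Qed.

Lemma Q_bs bs (faces : seq (seq (triangle R))) x : x \in bs -> domeQ bs faces x.
Proof. by move=> hx; apply: conv1; left. Qed.

Lemma face_sub (Q : set (pt3 R)) n1 c1 n2 c2 x0 x1 x2 :
  n1 != 0 -> cross (x1 - x0) (x2 - x0) != 0 ->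
  dot n1 x0 = c1 -> dot n1 x1 = c1 -> dot n1 x2 = c1 ->
  dot n2 x0 = c2 -> dot n2 x1 = c2 -> dot n2 x2 = c2 ->
  Q `&` [set x | dot n1 x = c1] `<=` Q `&` [set x | dot n2 x = c2].
Proof.
move=> n10 hc a0 a1 a2 b0 b1 b2 x [Qx /= hx]; split => //=.
have [a [b e]] : exists a b, x - x0 = a *: (x1 - x0) + b *: (x2 - x0).
  apply: (decomp hc n10); rewrite dotBr; lra.
have : dot n2 (x - x0) = 0 by rewrite e dotDZr !dotBr b0 b1 b2 subrr !mulr0 addr0.
rewrite dotBr; lra.
Qed.

Lemma face_eq (Q F1 F2 : set (pt3 R)) x0 x1 x2 : is_face Q F1 -> is_face Q F2 ->
  F1 x0 -> F1 x1 -> F1 x2 -> F2 x0 -> F2 x1 -> F2 x2 ->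
  cross (x1 - x0) (x2 - x0) != 0 -> F1 = F2.
Proof.
move=> [n1 [c1 [n10 [_ [-> _]]]]] [n2 [c2 [n20 [_ [-> _]]]]].
move=> [_ a0] [_ a1] [_ a2] [_ b0] [_ b1] [_ b2] hc.
apply/seteqP; split.
  exact: (face_sub n10 hc a0 a1 a2 b0 b1 b2).
exact: (face_sub n20 hc b0 b1 b2 a0 a1 a2).
Qed.

Lemma face_rep (Q F : set (pt3 R)) : is_face Q F ->
  exists n c, [/\ n != 0, forall x, Q x -> dot n x <= c &
     forall x, F x <-> (Q x /\ dot n x = c)].
Proof.
move=> [n [c [n0 [hQ [-> _]]]]]; exists n, c; split => // x; split; by case.
Qed.

Lemma cross2E u v : cross2 u v = cz (cross u v).
Proof. by rewrite crossz. Qed.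

Lemma horiz_false bs faces (F : seq (triangle R)) x0 x1 x2 :
  is_dome bs faces -> F \in faces -> faceU F x0 -> faceU F x1 -> faceU F x2 ->
  cz x0 = 0 -> cz x1 = 0 -> cz x2 = 0 -> cross2 (x1 - x0) (x2 - x0) != 0 -> False.
Proof.
move=> [[hs [hbz hcv]] [_ [_ [hP [hF _]]]]] Fin f0 f1 f2 z0 z1 z2 hc.
have [hfF [hne _]] := hF F Fin.
have [m [d [m0 _ hm]]] := face_rep hP.
have [mF [dF [_ _ hmF]]] := face_rep hfF.
set B0 := nth 0 bs 0; set B1 := nth 0 bs 1; set B2 := nth 0 bs 2.
have inb k : (k < 3)%N -> nth 0 bs k \in bs.
  by move=> hk; apply: mem_nth; apply: leq_trans hs.
have pB k : (k < 3)%N -> dot m (nth 0 bs k) = d /\ cz (nth 0 bs k) = 0.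
  move=> hk; split; last exact: hbz (inb k hk).
  by have [_ ->] := (hm (nth 0 bs k)).1 (conv1 (inb k hk)).
have s0 : (0 < size bs)%N := leq_trans (isT : (1 <= 3)%N) hs.
have s1 : (1 < size bs)%N := leq_trans (isT : (2 <= 3)%N) hs.
have hcr : 0 < cross2 (B1 - B0) (B2 - B0).
  have := hcv 0%N 2%N s0 hs isT.
  rewrite (modn_small s1) => /(_ isT).
  by rewrite /bnth !modn_small.
have [e0 z0'] := pB 0%N isT; have [e1 z1'] := pB 1%N isT; have [e2 z2'] := pB 2%N isT.
rewrite -/B0 in e0 z0'; rewrite -/B1 in e1 z1'; rewrite -/B2 in e2 z2'.
move: hcr; rewrite /cross2 !cxB !cyB => hcr.
have d1 : dot m (B1 - B0) = 0 by rewrite dotBr e0 e1 subrr.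
have d2 : dot m (B2 - B0) = 0 by rewrite dotBr e0 e2 subrr.
rewrite !dotE !cxB !cyB !czB z0' z1' z2' in d1 d2.
set u1 := cx B1 - cx B0 in d1 d2 hcr; set u2 := cy B1 - cy B0 in d1 d2 hcr.
set v1 := cx B2 - cx B0 in d1 d2 hcr; set v2 := cy B2 - cy B0 in d1 d2 hcr.
have mx0 : cx m = 0.
  have : cx m * (u1 * v2 - u2 * v1) = 0.
    have -> : cx m * (u1 * v2 - u2 * v1) =
      v2 * (cx m * u1 + cy m * u2 + cz m * (0 - 0)) - u2 * (cx m * v1 + cy m * v2 + cz m * (0 - 0)) by ring.
    by rewrite d1 d2; ring.
  move/eqP; rewrite mulf_eq0 => /orP[/eqP //|]; move: hcr; rewrite /u1 /u2 /v1 /v2; lra.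
have my0 : cy m = 0.
  have : cy m * (u1 * v2 - u2 * v1) = 0.
    have -> : cy m * (u1 * v2 - u2 * v1) =
      u1 * (cx m * v1 + cy m * v2 + cz m * (0 - 0)) - v1 * (cx m * u1 + cy m * u2 + cz m * (0 - 0)) by ring.
    by rewrite d1 d2; ring.
  move/eqP; rewrite mulf_eq0 => /orP[/eqP //|]; move: hcr; rewrite /u1 /u2 /v1 /v2; lra.
have d0 : d = 0 by rewrite -e0 dotE mx0 my0 z0'; ring.
have inP x : faceU F x -> cz x = 0 -> polyregion bs x.
  move=> fx zx; apply/(hm x); split; first by have [] := (hmF x).1 fx.
  by rewrite dotE mx0 my0 zx d0; ring.
apply: hne; apply: (face_eq hfF hP f0 f1 f2 (inP _ f0 z0) (inP _ f1 z1) (inP _ f2 z2)).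
apply/eqP => h; move: hc; by rewrite cross2E h cz0 eqxx.
Qed.
End S.


Section S.
Variable R : realType.
Implicit Types u v w x y z n p f : pt3 R.

Lemma dot_expand x z y : dot (x - z) (x - z) =
  dot (x - y) (x - y) - 2 * dot (x - y) (z - y) + dot (z - y) (z - y).
Proof. rewrite !dotE !cxB !cyB !czB; ring. Qed.

Lemma hz_id p f : cz p = 0 -> cz f = 0 ->
  (dot p f) ^+ 2 + (cross2 p f) ^+ 2 = dot p p * dot f f.
Proof. move=> hp hf; rewrite !dotE /cross2 hp hf; ring. Qed.

Lemma hdec p n y : cz p = 0 -> dot p p = 1 ->
  dot n y = dot n p * dot p y + cross2 p n * cross2 p y + cz n * cz y.
Proof.
move=> hp; rewrite !dotE /cross2 hp => h1.
apply/eqP; rewrite -subr_eq0; apply/eqP.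
set L := (X in X - _).
set Rr := (X in _ - X).
have -> : L - Rr = (1 - (cx p * cx p + cy p * cy p + 0 * 0)) * (cx n * cx y + cy n * cy y)
  by rewrite /L /Rr; ring.
by rewrite h1 subrr mul0r.
Qed.

Lemma dot_lagrange u v : dot (cross u v) (cross u v) = dot u u * dot v v - (dot u v) ^+ 2.
Proof. rewrite !dotE !crossx !crossy !crossz; ring. Qed.

Lemma dot_gt0 u : u != 0 -> 0 < dot u u.
Proof.
move/neq0P; rewrite dotE => h.
have h1 := sqr_ge0 (cx u); have h2 := sqr_ge0 (cy u); have h3 := sqr_ge0 (cz u).
rewrite -!expr2; case: h => [h|[h|h]]; move: h; move/sq_pos; lra.
Qed.

Lemma dot_ge0 u : 0 <= dot u u.
Proof. rewrite dotE; nra. Qed.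

Lemma cross2DZ p (a b : R) u v : cross2 p (a *: u + b *: v) = a * cross2 p u + b * cross2 p v.
Proof. rewrite /cross2 !cxD !cyD !cxZ !cyZ; ring. Qed.

Lemma cross2ZZ (a b : R) u v : cross2 (a *: u) (b *: v) = a * b * cross2 u v.
Proof. rewrite /cross2 !cxZ !cyZ; ring. Qed.

Lemma cross2pp p : cross2 p p = 0.
Proof. rewrite /cross2; ring. Qed.

Lemma vnorm_unit u : dot u u = 1 -> vnorm u = 1.
Proof. by rewrite /vnorm => ->; rewrite sqrtr1. Qed.

Lemma vnormZ (c : R) u : 0 < c -> vnorm (c *: u) = c * vnorm u.
Proof.
move=> c0; rewrite /vnorm.
have -> : dot (c *: u) (c *: u) = c ^+ 2 * dot u u.
  by rewrite !dotE !cxZ !cyZ !czZ; ring.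
by rewrite sqrtrM ?sqr_ge0 // sqrtr_sqr gtr0_norm.
Qed.

Lemma vangle_scale (c d : R) u v : 0 < c -> 0 < d -> vangle (c *: u) (d *: v) = vangle u v.
Proof.
move=> c0 d0; rewrite /vangle !vnormZ //.
have -> : dot (c *: u) (d *: v) = (c * d) * dot u v by rewrite !dotE !cxZ !cyZ !czZ; ring.
congr acos.
have -> : c * vnorm u * (d * vnorm v) = (c * d) * (vnorm u * vnorm v) by ring.
have cd0 : c * d != 0 by rewrite mulf_neq0 // gt_eqF.
by rewrite invfM mulrACA divff // mul1r.
Qed.

Lemma vangleC u v : vangle u v = vangle v u.
Proof. by rewrite /vangle dotC [vnorm u * _]mulrC. Qed.

Lemma part1_final (a b P Rf : R) : a ^+ 2 + b ^+ 2 + a * b = 1 -> 0 <= b ->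
  (a + b / 2 = 1 / 2 \/ a / 2 + b = 1 / 2) -> a * P + b * Rf = 1 / 2 ->
  Rf <= P / 2 -> -1 < P -> P <= - (1 / 2) -> False.
Proof.
move=> hn hb [h|h] he hR h1 h2.
- have ea : a = 1 / 2 - b / 2 by lra.
  rewrite ea in hn he.
  have hb2 : b ^+ 2 = 1 by move: hn; rewrite expr2 => hn; nra.
  have eb : b = 1.
    move: hb2 => /eqP; rewrite sqrf_eq1 => /orP[/eqP //|/eqP e]; lra.
  rewrite eb in he; lra.
- have ea : a = 1 - 2 * b by lra.
  rewrite ea in hn he.
  have hb2 : b * (b - 1) = 0 by move: hn; rewrite !expr2 => hn; nra.
  move/eqP: hb2; rewrite mulf_eq0 => /orP[/eqP e|/eqP e].
  + rewrite e in he; lra.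
  + have eb : b = 1 by lra.
    rewrite eb in he; lra.
Qed.

Lemma part2_caseA (mu n3 sg r3 tau sg2 g3 mu2 nu2 : R) :
  mu * sg + n3 * r3 = 0 -> mu * tau <= 0 -> mu * sg2 + n3 * g3 < 0 ->
  mu2 * sg2 + nu2 * g3 = 0 -> mu2 * sg + nu2 * r3 <= 0 -> mu2 * tau <= 0 ->
  0 < mu2 ^+ 2 + nu2 ^+ 2 -> tau != 0 -> 0 < r3 -> 0 <= g3 -> n3 < 0 ->
  g3 = 0 /\ sg2 != 0.
Proof.
move=> h1 h2 h3 h4 h5 h6 h7 h8 h9 h10 h11.
have musg : 0 < mu * sg by nra.
set D := sg2 * r3 - sg * g3.
have muD : mu * D < 0.
  have -> : mu * D = r3 * (mu * sg2 + n3 * g3) + g3 * (- (mu * sg + n3 * r3)) by rewrite /D; ring.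
  rewrite h1 oppr0 mulr0 addr0; nra.
have mu2D : 0 <= mu2 * D.
  have -> : mu2 * D = - (g3 * (mu2 * sg + nu2 * r3)) + r3 * (mu2 * sg2 + nu2 * g3) by rewrite /D; ring.
  rewrite h4 mulr0 addr0; nra.
have t2 : 0 < tau ^+ 2 by apply: sq_pos.
have p1 : mu * mu2 * tau ^+ 2 >= 0.
  have -> : mu * mu2 * tau ^+ 2 = (mu * tau) * (mu2 * tau) by rewrite expr2; ring.
  nra.
have D2 : 0 < D ^+ 2 by apply: sq_pos; apply/eqP => e; rewrite e mulr0 in muD; lra.
have p2 : mu * mu2 * D ^+ 2 <= 0.
  have -> : mu * mu2 * D ^+ 2 = (mu * D) * (mu2 * D) by rewrite expr2; ring.
  nra.
have mumu2 : mu * mu2 = 0 by nra.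
have mu0 : mu != 0 by apply/eqP => e; rewrite e mul0r in musg; lra.
have emu2 : mu2 = 0.
  by move/eqP: mumu2; rewrite mulf_eq0 (negbTE mu0) /= => /eqP.
rewrite emu2 in h4 h7; rewrite mul0r add0r in h4.
have nu20 : nu2 != 0 by apply/eqP => e; rewrite e expr0n /= in h7; lra.
have eg3 : g3 = 0 by move/eqP: h4; rewrite mulf_eq0 (negbTE nu20) /= => /eqP.
split => //; apply/eqP => e; rewrite e eg3 in h3; lra.
Qed.

Lemma angle_real (a b a' b' : R) : 0 <= a -> 0 <= b -> 0 <= a' -> 0 <= b' ->
  0 < a ^+ 2 + b ^+ 2 + a * b -> 0 < a' ^+ 2 + b' ^+ 2 + a' * b' ->
  let D := a * a' + b * b' + (a * b' + b * a') / 2 in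
  let S := Num.sqrt (a ^+ 2 + b ^+ 2 + a * b) * Num.sqrt (a' ^+ 2 + b' ^+ 2 + a' * b') in
  1 / 2 <= D / S /\ D / S <= 1.
Proof.
move=> ha hb ha' hb' hX hY D S.
have S0 : 0 < S by rewrite /S mulr_gt0 // sqrtr_gt0.
have SS : S ^+ 2 = (a ^+ 2 + b ^+ 2 + a * b) * (a' ^+ 2 + b' ^+ 2 + a' * b').
  by rewrite /S exprMn !sqr_sqrtr // ltW.
have D0 : 0 <= D by rewrite /D; nra.
have e1 : 4 * D ^+ 2 - S ^+ 2 = 3 * (a * a' + b * b' + b * a') * (a * a' + b * b' + a * b').
  by rewrite SS /D; field.
have e2 : S ^+ 2 - D ^+ 2 = 3 / 4 * (a * b' - b * a') ^+ 2.
  by rewrite SS /D; field.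
have i1 : S ^+ 2 <= 4 * D ^+ 2.
  have : 0 <= 3 * (a * a' + b * b' + b * a') * (a * a' + b * b' + a * b').
    apply: mulr_ge0; last nra. apply: mulr_ge0; nra.
  lra.
have i2 : D ^+ 2 <= S ^+ 2 by have := sqr_ge0 (a * b' - b * a'); lra.
have j1 : S <= 2 * D by rewrite !expr2 in i1; nra.
have j2 : D <= S by rewrite !expr2 in i2; nra.
split.
- by rewrite ler_pdivlMr //; lra.
- by rewrite ler_pdivrMr //; lra.
Qed.
End S.


Section S.
Variable R : realType.

Lemma onormal_vert (Q : set (pt3 R)) t n x : outward_normal Q t n -> tverts t x ->
  dot n x = dot n t.1.1.
Proof.
move=> [_ [h1 [h2 _]]] [->|[->|->]] //.
- by move/eqP: h1; rewrite dotBr subr_eq0 => /eqP.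
- by move/eqP: h2; rewrite dotBr subr_eq0 => /eqP.
Qed.

Lemma core bs faces (b q1 q2 : pt3 R) (t1 t2 t3 : triangle R) :
  is_dome bs faces -> cz b = 0 -> cz q1 = 0 -> cz q2 = 0 ->
  cross2 (q1 - b) (q2 - b) != 0 -> 2 * pi / 3 <= vangle (q1 - b) (q2 - b) ->
  dome_triangle faces t1 -> dome_triangle faces t2 -> dome_triangle faces t3 ->
  tverts t1 b -> tverts t2 b -> tverts t3 b ->
  shares_edge_at b t1 t2 -> shares_edge_at b t2 t3 ->
  along t1 b q1 -> along t3 b q2 -> downward (domeQ bs faces) t1 ->
  ~ coplanar t1 t2 /\
  (forall F, F \in faces -> t1 \in F -> face_angle (faceU F) b = pi / 3).
Proof.
move=> Hd bz q1z q2z hq hang [F1 [F1in t1F1]] [G2 [G2in t2G2]] [G3 [G3in t3G3]]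
  tb1 tb2 tb3 [v [vb [tv1 tv2]]] [v' [v'b [tv'2 tv'3]]]
  [a [k [ta [k0 ea]]]] [e [k' [te [k'0 ee]]]] [n [hn nz]].
have Hd' := Hd.
move: Hd' => [Hcp [Hint [Hz [HP [HF [Hinj Hall]]]]]].
set Q := domeQ bs faces.
have [_ [_ [_ [ut1 _]]]] := HF F1 F1in; have {}ut1 := ut1 t1 t1F1.
have [_ [_ [_ [ut2 _]]]] := HF G2 G2in; have {}ut2 := ut2 t2 t2G2.
have [_ [_ [_ [ut3 _]]]] := HF G3 G3in; have {}ut3 := ut3 t3 t3G3.
have Qv1 x : tverts t1 x -> Q x by apply: Q_vert F1in t1F1.
have Qv2 x : tverts t2 x -> Q x by apply: Q_vert G2in t2G2.
have Qv3 x : tverts t3 x -> Q x by apply: Q_vert G3in t3G3.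
have Qz x : Q x -> 0 <= cz x by apply: Hz.
set p := a - b; set f := e - b.
have pz : cz p = 0 by rewrite /p ea czZ czB q1z bz subrr mulr0.
have fz : cz f = 0 by rewrite /f ee czZ czB q2z bz subrr mulr0.
have tau0 : cross2 p f != 0.
  by rewrite /p /f ea ee cross2ZZ !mulf_neq0 // gt_eqF.
have ab : a != b.
  apply/eqP => e0; move: tau0; rewrite /p e0 subrr /cross2 cx0 cy0; by rewrite !mul0r subrr eqxx.
have eb : e != b.
  apply/eqP => e0; move: tau0; rewrite /f e0 subrr /cross2 cx0 cy0; by rewrite !mulr0 subrr eqxx.
have pp : dot p p = 1 by apply: (tri_dist ut1).
have ff : dot f f = 1 by apply: (tri_dist ut3).
have [c [tc ca cb hall1]] := tri_third ut1 tb1 ta ab.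
set r := c - b.
have rr : dot r r = 1 by apply: (tri_dist ut1).
have pr : dot p r = 1 / 2.
  have ac : a != c by rewrite eq_sym.
  have := tri_dist ut1 ta tc ac.
  rewrite (dot_expand a c b) -/p -/r pp rr; lra.
have rp : dot r p = 1 / 2 by rewrite dotC.
set P := dot p f.
have hPt : P ^+ 2 + (cross2 p f) ^+ 2 = 1 by rewrite hz_id // pp ff mulr1.
have tt : 0 < (cross2 p f) ^+ 2 by apply: sq_pos.
have Pm1 : -1 < P by nra.
have P1 : P < 1 by nra.
have Ph : P <= - (1 / 2).
  apply: acos_ge2pi3; first by apply/andP; split; lra.
  move: hang.
  have -> : q1 - b = k^-1 *: p by rewrite /p ea scalerA mulVf ?gt_eqF // scale1r.
  have -> : q2 - b = k'^-1 *: f by rewrite /f ee scalerA mulVf ?gt_eqF // scale1r.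
  rewrite vangle_scale ?invr_gt0 // /vangle !vnorm_unit // mulr1 divr1 //.
have hnv x : tverts t1 x -> dot n x = dot n b.
  by move=> hx; rewrite (onormal_vert hn hx) (onormal_vert hn tb1).
have hnQ y : Q y -> dot n y <= dot n b.
  move=> Qy; have [_ [_ [_ h]]] := hn; have := h y Qy.
  by rewrite dotBr -(onormal_vert hn tb1) subr_le0.
have np : dot n p = 0 by rewrite dotBr (hnv a ta) subrr.
have nr : dot n r = 0 by rewrite dotBr (hnv c tc) subrr.
have az : cz a = 0 by move: pz; rewrite /p czB bz subr0.
have r3e : cz r = cz c by rewrite /r czB bz subr0.
have r3pos : 0 < cz r.
  rewrite lt_def r3e (Qz c (Qv1 c tc)) andbT; apply/eqP => c3.
  apply: (horiz_false Hd F1in (faceU_vert t1F1 tb1) (faceU_vert t1F1 ta) (faceU_vert t1F1 tc) bz az c3).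
  rewrite -/p -/r; apply/eqP => s0.
  have := hz_id pz (etrans r3e c3); rewrite pr s0 pp rr; lra.
set mu := cross2 p n; set sg := cross2 p r; set tau := cross2 p f.
have hdn y : dot n y = mu * cross2 p y + cz n * cz y.
  by rewrite (hdec n y pz pp) np mul0r add0r.
have e1 : mu * sg + cz n * cz r = 0 by rewrite -hdn.
have e2 : mu * tau <= 0.
  have := hdn f; rewrite fz mulr0 addr0 => <-.
  by rewrite /f dotBr subr_le0; apply: hnQ; apply: Qv3.
have Rfe : dot r f = P / 2 + sg * tau.
  rewrite (hdec r f pz pp) rp fz mulr0 addr0 -/P /sg /tau; lra.
have stau : sg * tau <= 0.
  have musg : 0 < mu * sg by nra.
  have mu0 : mu != 0 by apply/eqP => m0; rewrite m0 mul0r in musg; lra.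
  have mu2 := sq_pos mu0.
  have : mu ^+ 2 * (sg * tau) <= 0.
    have -> : mu ^+ 2 * (sg * tau) = (mu * sg) * (mu * tau) by rewrite expr2; ring.
    nra.
  nra.
have crpr : cross p r != 0.
  apply/eqP => h0; have := @dot_lagrange R p r; rewrite h0 dot00 pp rr pr; lra.
have hvac : v = a \/ v = c.
  by case: (hall1 v tv1) => [vb'|//]; rewrite vb' eqxx in vb.
have NC : ~ coplanar t1 t2.
  move=> [m [c0 [m0 hm]]].
  have mp : dot m p = 0 by rewrite dotBr (hm a (or_introl ta)) (hm b (or_introl tb1)) subrr.
  have mr : dot m r = 0 by rewrite dotBr (hm c (or_introl tc)) (hm b (or_introl tb1)) subrr.
  have mv : dot m (v' - b) = 0.
    by rewrite dotBr (hm v' (or_intror tv'2)) (hm b (or_introl tb1)) subrr.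
  have [al [be ev']] := decomp crpr m0 mp mr mv.
  set X := v' - b in ev'.
  have hX : dot X X = 1 by apply: (tri_dist ut2).
  have dXp : dot X p = al + be / 2 by rewrite ev' dotDZl pp rp; field.
  have dXr : dot X r = al / 2 + be by rewrite ev' dotDZl pr rr; field.
  have hnorm : al ^+ 2 + be ^+ 2 + al * be = 1.
    by move: hX; rewrite {1}ev' dotDZl (dotC p X) (dotC r X) dXp dXr => <-; field.
  have K : dot X p = 1 / 2 \/ dot X r = 1 / 2.
    case: (eqVneq v' v) => [ev|nv].
    - case: hvac => ev2.
      + by right; rewrite /X ev ev2 -/p pr.
      + by left; rewrite /X ev ev2 -/r rp.
    - have := tri_dist ut2 tv'2 tv2 nv; rewrite (dot_expand v' v b) -/X hX.
      case: hvac => ev2; rewrite ev2.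
      + rewrite -/p pp => h; left; lra.
      + rewrite -/r rr => h; right; lra.
  have be0 : 0 <= be.
    have : cz X = be * cz r by rewrite ev' czD !czZ pz mulr0 add0r.
    rewrite /X czB bz subr0 => h; have := Qz v' (Qv2 v' tv'2); rewrite h => h'.
    nra.
  have nve : v' != e.
    apply/eqP => ev; have : X = f by rewrite /X ev.
    move=> Xf; have : cz X = 0 by rewrite Xf fz.
    rewrite ev' czD !czZ pz mulr0 add0r => /eqP; rewrite mulf_eq0 (gt_eqF r3pos) orbF => /eqP be00.
    move: tau0; rewrite -/f -Xf ev' be00 scale0r addr0 /cross2 cxZ cyZ.
    have -> : cx p * (al * cy p) - cy p * (al * cx p) = 0 by ring.
    by rewrite eqxx.
  have hXf : dot X f = 1 / 2.
    have := tri_dist ut3 tv'3 te nve; rewrite (dot_expand v' e b) -/X -/f hX ff; lra.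
  have hXf' : dot X f = al * P + be * dot r f by rewrite ev' dotDZl.
  have K' : al + be / 2 = 1 / 2 \/ al / 2 + be = 1 / 2.
    by case: K => h; [left|right]; rewrite -?dXp -?dXr.
  have hE : al * P + be * dot r f = 1 / 2 by rewrite -hXf' hXf.
  have hRP : dot r f <= P / 2 by rewrite Rfe; lra.
  exact: (part1_final hnorm be0 K' hE hRP Pm1 Ph).
split => // F Fin t1F.
have [hfG _] := HF G2 G2in.
have [n2 [c2 [n20 hQ2 hG2]]] := face_rep hfG.
have hn2v x : tverts t2 x -> dot n2 x = c2.
  by move=> hx; have [] := (hG2 x).1 (faceU_vert t2G2 hx).
have hn2Q y : Q y -> dot n2 (y - b) <= 0.
  by move=> Qy; rewrite dotBr (hn2v b tb2) subr_le0; apply: hQ2.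
case: hvac => ev.
- exfalso.
  have ta2 : tverts t2 a by rewrite -ev.
  have n2p : dot n2 p = 0 by rewrite dotBr (hn2v a ta2) (hn2v b tb2) subrr.
  have [g [tg ng]] : exists g, tverts t2 g /\ dot n g != dot n b.
    case: (pselect (exists g, tverts t2 g /\ dot n g != dot n b)) => // hne.
    exfalso; apply: NC; exists n, (dot n b); split; first by case: hn.
    move=> x [hx|hx]; first exact: hnv.
    by case: (eqVneq (dot n x) (dot n b)) => // hne'; exfalso; apply: hne; exists x.
  have ngl : dot n (g - b) < 0.
    rewrite dotBr subr_lt0 lt_def hnQ ?andbT; last exact: Qv2.
    by rewrite eq_sym.
  have n2g : dot n2 (g - b) = 0 by rewrite dotBr (hn2v g tg) (hn2v b tb2) subrr.
  have n2r : dot n2 r <= 0 by apply: hn2Q; apply: Qv1.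
  have n2f : dot n2 f <= 0 by apply: hn2Q; apply: Qv3.
  have gz : 0 <= cz (g - b) by rewrite czB bz subr0; apply: Qz; apply: Qv2.
  have hdn2 y : dot n2 y = cross2 p n2 * cross2 p y + cz n2 * cz y.
    by rewrite (hdec n2 y pz pp) n2p mul0r add0r.
  have h3 : mu * cross2 p (g - b) + cz n * cz (g - b) < 0 by rewrite -hdn.
  have h4 : cross2 p n2 * cross2 p (g - b) + cz n2 * cz (g - b) = 0 by rewrite -hdn2.
  have h5 : cross2 p n2 * sg + cz n2 * cz r <= 0 by rewrite -hdn2.
  have h6 : cross2 p n2 * tau <= 0.
    by move: n2f; rewrite hdn2 fz mulr0 addr0.
  have h7 : 0 < cross2 p n2 ^+ 2 + cz n2 ^+ 2.
    by have := dot_gt0 n20; rewrite hdn2 !expr2.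
  have [g30 sg20] := part2_caseA e1 e2 h3 h4 h5 h6 h7 tau0 r3pos gz nz.
  have gz0 : cz g = 0 by move: g30; rewrite czB bz subr0.
  apply: (horiz_false Hd G2in (faceU_vert t2G2 tb2) (faceU_vert t2G2 ta2) (faceU_vert t2G2 tg) bz az gz0).
  by rewrite -/p.
- have tc2 : tverts t2 c by rewrite -ev.
  have n2r : dot n2 r = 0 by rewrite dotBr (hn2v c tc2) (hn2v b tb2) subrr.
  have n2ple : dot n2 p <= 0 by apply: hn2Q; apply: Qv1.
  have n2pne : dot n2 p != 0.
    apply/eqP => h; apply: NC; exists n2, c2; split => //.
    move=> x [hx|hx]; last exact: hn2v.
    case: (hall1 x hx) => [->|[->|->]]; first exact: hn2v.
    + by move/eqP: h; rewrite dotBr subr_eq0 (hn2v b tb2) => /eqP.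
    + by move/eqP: n2r; rewrite dotBr subr_eq0 (hn2v b tb2) => /eqP.
  have n2plt : dot n2 p < 0 by rewrite lt_neqAle n2pne n2ple.
  have [hfF _] := HF F Fin.
  have [mF [dF [mF0 _ hmF]]] := face_rep hfF.
  have mFv x : tverts t1 x -> dot mF x = dF.
    by move=> hx; have [] := (hmF x).1 (faceU_vert t1F hx).
  have mFp : dot mF p = 0 by rewrite dotBr (mFv a ta) (mFv b tb1) subrr.
  have mFr : dot mF r = 0 by rewrite dotBr (mFv c tc) (mFv b tb1) subrr.
  have W x : faceU F x -> exists al be, [/\ 0 <= al, 0 <= be & x - b = al *: p + be *: r].
    move=> hx; have [Qx mx] := (hmF x).1 hx.
    have mxb : dot mF (x - b) = 0 by rewrite dotBr mx (mFv b tb1) subrr.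
    have [al [be ex]] := decomp crpr mF0 mFp mFr mxb.
    exists al, be; split => //.
    + have := hn2Q x Qx; rewrite ex dotDZr n2r mulr0 addr0 => h; nra.
    + have : cz (x - b) = be * cz r by rewrite ex czD !czZ pz mulr0 add0r.
      rewrite czB bz subr0 => h; have := Qz x Qx; rewrite h => h'; nra.
  have dXX al be : dot (al *: p + be *: r) (al *: p + be *: r) = al ^+ 2 + be ^+ 2 + al * be.
    by rewrite dotDZl !dotDZr pp pr rp rr; field.
  have dXY al be al' be' : dot (al *: p + be *: r) (al' *: p + be' *: r) =
      al * al' + be * be' + (al * be' + be * al') / 2.
    by rewrite dotDZl !dotDZr pp pr rp rr; field.
  have Ang x y : faceU F x -> faceU F y -> x != b -> y != b ->
      vangle (x - b) (y - b) <= pi / 3.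
    move=> hx hy xb yb.
    have [al [be [al0 be0 ex]]] := W x hx.
    have [al' [be' [al0' be0' ey]]] := W y hy.
    have X0 : x - b != 0 by rewrite subr_eq0.
    have Y0 : y - b != 0 by rewrite subr_eq0.
    have hX := dot_gt0 X0; have hY := dot_gt0 Y0.
    rewrite ex dXX in hX; rewrite ey dXX in hY.
    have [i1 i2] := angle_real al0 be0 al0' be0' hX hY.
    rewrite /vangle /vnorm ex ey dXY !dXX -acos_half.
    apply: acos_le; [apply/andP; split; lra | apply/andP; split; lra | exact: i1].
  have Pin : vangle p r = pi / 3.
    by rewrite /vangle pr !vnorm_unit // mulr1 divr1 acos_half.
  rewrite /face_angle; set S := (X in sup X).
  have Sin : S (pi / 3).
    exists a, c; split; first exact: faceU_vert t1F ta.
    split; first exact: faceU_vert t1F tc.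
    by split => //; split => //; rewrite -Pin.
  have ubS : ubound S (pi / 3).
    by move=> y [x [z [hx [hz [xb [zb ->]]]]]]; apply: Ang.
  apply/le_anti/andP; split.
  + by apply: ge_sup => //; exists (pi / 3).
  + by apply: (ub_le_sup _ Sin); exists (pi / 3).
Qed.
End S.


Lemma bnth_in (R : realType) (bs : seq (pt3 R)) j : (0 < size bs)%N -> bnth bs j \in bs.
Proof. by move=> h; rewrite /bnth mem_nth // ltn_pmod. Qed.

Lemma prev_idx (s i : nat) : (2 < s)%N -> (i < s)%N ->
  [/\ (((i + s).-1 %% s) < s)%N, ((i + s).-1 %% s)%N != i,
      ((i + s).-1 %% s)%N != (i.+1 %% s)%N & (((i + s).-1 %% s) %% s = ((i + s).-1 %% s))%N].
Proof.
move=> hs hi.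
have s0 : (0 < s)%N by apply: leq_trans hs.
have hj : ((i + s).-1 %% s)%N = (if i == 0%N then s.-1 else i.-1).
  case: i hi => [|i'] hi /=.
  - by rewrite add0n modn_small // prednK // leqnn.
  -
    by rewrite modnDr modn_small // ltnW.
have hi1 : (i.+1 %% s)%N = (if i.+1 == s then 0%N else i.+1).
  case: eqP => [->|ne]; first by rewrite modnn.
  by rewrite modn_small // ltn_neqAle hi andbT; apply/eqP.
split; first by rewrite ltn_pmod.
- by rewrite hj; case: ifP => /eqP h1; lia.
- by rewrite hj hi1; case: ifP => /eqP h1; case: ifP => /eqP h2; lia.
- by rewrite modn_mod.
Qed.

Unset Implicit Arguments. Set Strict Implicit.

Theorem mainTheorem9 (R : realType) (bs : seq (pt3 R))
  (faces : seq (seq (triangle R))) (i : nat) (t1 t2 t3 : triangle R) :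
  is_dome bs faces -> (i < size bs)%N ->
  2 * pi / 3 <= vangle (bnth bs (i + size bs).-1 - bnth bs i)
                       (bnth bs i.+1 - bnth bs i) ->
  dome_triangle faces t1 -> dome_triangle faces t2 -> dome_triangle faces t3 ->
  uniq [:: t1; t2; t3] ->
  (forall t, dome_triangle faces t ->
     (tverts t (bnth bs i) <-> (t = t1 \/ t = t2 \/ t = t3))) ->
  shares_edge_at (bnth bs i) t1 t2 -> shares_edge_at (bnth bs i) t2 t3 ->
  (along t1 (bnth bs i) (bnth bs (i + size bs).-1) /\
     along t3 (bnth bs i) (bnth bs i.+1) \/
   along t1 (bnth bs i) (bnth bs i.+1) /\
     along t3 (bnth bs i) (bnth bs (i + size bs).-1)) ->
  downward (domeQ bs faces) t1 ->
  ~ coplanar t1 t2 /\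
  (forall F, F \in faces -> t1 \in F -> face_angle (faceU F) (bnth bs i) = pi / 3).
Proof.
move=> Hd hi hang dt1 dt2 dt3 _ hiff s12 s23 hal hdown.
have Hd' := Hd; move: Hd' => [[hs [hbz hcv]] _].
have s0 : (0 < size bs)%N by apply: leq_trans hs.
have tb1 : tverts t1 (bnth bs i) by apply/(hiff t1 dt1); left.
have tb2 : tverts t2 (bnth bs i) by apply/(hiff t2 dt2); right; left.
have tb3 : tverts t3 (bnth bs i) by apply/(hiff t3 dt3); right; right.
have zb j : cz (bnth bs j) = 0 by apply: hbz; apply: bnth_in.
have [jlt jni jnn jmod] := prev_idx hs hi.
have hc := hcv i _ hi jlt jni jnn.
have ej : bnth bs ((i + size bs).-1 %% size bs) = bnth bs (i + size bs).-1.
  by rewrite /bnth modn_mod.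
rewrite ej in hc.
case: hal => [[a1 a3]|[a1 a3]].
- apply: (core Hd (zb i) (zb _) (zb _) _ hang dt1 dt2 dt3 tb1 tb2 tb3 s12 s23 a1 a3 hdown).
  rewrite /cross2 in hc *; apply/eqP => h; move: hc; lra.
- apply: (core Hd (zb i) (zb _) (zb _) _ _ dt1 dt2 dt3 tb1 tb2 tb3 s12 s23 a1 a3 hdown).
  + by rewrite gt_eqF.
  + by rewrite vangleC.
Qed.
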